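(* Let $\mathcal{M}=(E,\mathcal{I},A,w)$ be a weighted uncertainty matroid with $A_e=\{L_e,U_e\}$ for all $e\in E$, and let $M[D,K]$ be a compatible minor of $\mathcal{M}$ that contains no element $e$ with $w_e=U_e$ or $w_e=L_e$. Then $K$ is a minimum-weight basis of $\mathcal{M}$ that can be verified with a minimum-cost certificate. Moreover, if in addition the query costs are uniform and there are reals $L<U$ with $A_e=\{L,U\}$ for all $e\in E$, then every minimum-weight basis $B$ of $\mathcal{M}$ has the same verification cost.
   Context: A weighted uncertainty matroid $\mathcal{M}=(E,\mathcal{I},A,w)$ consists of a matroid $M=(E,\mathcal{I})$ on a finite set $E$, for each $e\in E$ a non-empty finite union $A_e$ of bounded real intervals (each open or closed, single points allowed), a weight $w_e\in A_e$, and a query cost $c_e\ge0$. $L_e=\inf A_e$, $U_e=\sup A_e$. A minimum-weight basis (MWB) is a basis minimizing total weight. A weight assignment is $w^*$ with $w^*_e\in A_e$, consistent with $Q$ if $w^*_e=w_e$ on $Q$. $Q$ verifies an MWB $B$ if for every weight assignment consistent with $Q$, $B$ is an MWB with respect to it; a certificate for $\mathcal{M}$ is a set verifying some MWB; $c^*$ is the minimum cost $\sum_{e\in Q}c_e$ of a certificate for $\mathcal{M}$ (a minimum-cost certificate). The verification cost of an MWB $B$ is the minimum cost of a set verifying $B$. For $D,K\subseteq E$, $M[D,K]$ is the matroid obtained from $M$ by deleting $D$ and contracting $K$, ground set $E\setminus(D\cup K)$. $M[D,K]$ is a compatible minor if there is a set $Q$ of cost $c^*$ verifying an MWB $B$ of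 $\mathcal{M}$ with $K\subseteq B$ and $D\cap B=\emptyset$. *)

(* Defs.v *)
From HB Require Import structures.
From mathcomp Require Import all_boot all_order all_algebra.
From mathcomp Require Import reals.
Set Implicit Arguments. Unset Strict Implicit. Unset Printing Implicit Defensive.
Import Order.TTheory GRing.Theory Num.Theory.
Local Open Scope ring_scope.

Section UncertaintyMatroid.
Variable E : finType.

Definition is_matroid (I : {set {set E}}) : Prop :=
  [/\ set0 \in I,
      (forall A B : {set E}, B \in I -> A \subset B -> A \in I) &
      (forall A B : {set E}, A \in I -> B \in I -> (#|A| < #|B|)%N ->
         exists2 e, e \in B :\: A & e |: A \in I)].

Definition is_basis (I : {set {set E}}) (B : {set E}) : Prop :=
  B \in I /\ forall B' : {set E}, B' \in I -> B \subset B' -> B' = B.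

Variable R : realType.

Definition setweight (w : E -> R) (S : {set E}) : R := \sum_(e in S) w e.

Definition is_MWB (I : {set {set E}}) (w : E -> R) (B : {set E}) : Prop :=
  is_basis I B /\ forall B', is_basis I B' -> setweight w B <= setweight w B'.

Definition area (L U : E -> R) (e : E) (x : R) : Prop := x = L e \/ x = U e.

Definition consistent (L U : E -> R) (w : E -> R) (Q : {set E}) (w' : E -> R) : Prop :=
  (forall e, area L U e (w' e)) /\ (forall e, e \in Q -> w' e = w e).

Definition verifies (I : {set {set E}}) (L U w : E -> R) (Q B : {set E}) : Prop :=
  forall w', consistent L U w Q w' -> is_MWB I w' B.

Definition certificate (I : {set {set E}}) (L U w : E -> R) (Q : {set E}) : Prop :=
  exists B, verifies I L U w Q B.

Definition qcost (c : E -> R) (Q : {set E}) : R := \sum_(e in Q) c e.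

Definition min_cost_certificate (I : {set {set E}}) (L U w c : E -> R) (Q : {set E}) : Prop :=
  certificate I L U w Q /\
  forall Q', certificate I L U w Q' -> qcost c Q <= qcost c Q'.

Definition verification_cost (I : {set {set E}}) (L U w c : E -> R) (B : {set E}) (x : R) : Prop :=
  (exists2 Q, verifies I L U w Q B & qcost c Q = x) /\
  forall Q, verifies I L U w Q B -> x <= qcost c Q.

Definition compatible_minor (I : {set {set E}}) (L U w c : E -> R) (D K : {set E}) : Prop :=
  exists Q B, [/\ min_cost_certificate I L U w c Q, verifies I L U w Q B,
     is_MWB I w B, K \subset B & [disjoint D & B]].

End UncertaintyMatroid.

(* Main.v *)
Require Import Defs.
From HB Require Import structures.
From mathcomp Require Import all_boot all_order all_algebra.
From mathcomp Require Import reals.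
From mathcomp Require Import lra perm.
Set Implicit Arguments. Unset Strict Implicit. Unset Printing Implicit Defensive.
Import Order.TTheory GRing.Theory Num.Theory.
Local Open Scope ring_scope.

Lemma basis_max (E : finType) (I : {set {set E}}) B z :
  is_basis I B -> z |: B \in I -> z \in B.
Proof.
move=> [_ hm] hz; have := hm _ hz (subsetUr _ _) => <-.
by rewrite setU11.
Qed.

Lemma basis_card (E : finType) (I : {set {set E}}) B1 B2 :
  is_matroid I -> is_basis I B1 -> is_basis I B2 -> #|B1| = #|B2|.
Proof.
move=> [_ _ haug] hB1 hB2.
have H : forall X Y, is_basis I X -> is_basis I Y -> (#|X| <= #|Y|)%N.
  move=> X Y hX hY; rewrite leqNgt; apply/negP => hlt.
  have [z hz hzI] := haug _ _ hY.1 hX.1 hlt.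
  move: hz; rewrite inE => /andP[/negP hn _]; apply: hn.
  exact: basis_max hY hzI.
by apply/eqP; rewrite eqn_leq !H.
Qed.

Lemma basis_of_card (E : finType) (I : {set {set E}}) B A :
  is_matroid I -> is_basis I B -> A \in I -> (#|B| <= #|A|)%N -> is_basis I A.
Proof.
move=> [_ _ haug] hB hA hc; split => // A' hA' hsub.
apply/eqP; rewrite eq_sym eqEcard hsub /=; rewrite leqNgt; apply/negP => hlt.
have [z hz hzI] := haug _ _ hB.1 hA' (leq_ltn_trans hc hlt).
move: hz; rewrite inE => /andP[/negP hn _]; apply: hn.
exact: basis_max hB hzI.
Qed.

Lemma exchange (E : finType) (I : {set {set E}}) B1 B2 x :
  is_matroid I -> is_basis I B1 -> is_basis I B2 -> x \in B1 -> x \notin B2 ->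
  exists2 y, y \in B2 :\: B1 & is_basis I (y |: (B1 :\ x)).
Proof.
move=> hM hB1 hB2 hx hx2.
have hM' := hM; case: hM' => _ hsub haug.
have hI : B1 :\ x \in I by apply: hsub hB1.1 (subD1set _ _).
have hc : #|B1 :\ x| = #|B1|.-1 by rewrite (cardsD1 x B1) hx.
have hlt : (#|B1 :\ x| < #|B2|)%N.
  rewrite hc -(basis_card hM hB1 hB2).
  have : (0 < #|B1|)%N by apply/card_gt0P; exists x.
  by case: #|B1|.
have [y hy hyI] := haug _ _ hI hB2.1 hlt.
move: hy; rewrite !inE => /andP[hy1 hy2].
have hyx : y != x by apply: contraNneq hx2 => <-.
move: hy1; rewrite hyx /= => hy1.
exists y; first by rewrite inE hy1 hy2.
apply: basis_of_card hM hB1 hyI _.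
rewrite cardsU1 !inE hyx hy1 /= hc.
by case: #|B1| => //.
Qed.
Definition wc (E : finType) (R : realType) (L U w : E -> R) (Q B : {set E}) (x : E) : R :=
  if x \in Q then w x else if x \in B then U x else L x.

Lemma wc_consistent (E : finType) (R : realType) (L U w : E -> R) Q B :
  (forall e, area L U e (w e)) -> consistent L U w Q (wc L U w Q B).
Proof.
move=> hw; split => e; rewrite /wc.
  by case: ifP => _ //; case: ifP => _; [right|left].
by move=> ->.
Qed.

Lemma verif_wc (E : finType) (R : realType) (I : {set {set E}}) (L U w : E -> R) Q B :
  (forall e, L e <= U e) -> (forall e, area L U e (w e)) ->
  is_MWB I (wc L U w Q B) B -> verifies I L U w Q B.
Proof.
move=> hLU hw [hB hmin] w' [hw' hQ]; split => // B2 hB2.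
have := hmin B2 hB2; rewrite /setweight.
rewrite (big_setID (A:=B) B2 w') (big_setID (A:=B) B2 (wc L U w Q B)).
rewrite (big_setID (A:=B2) B w') (big_setID (A:=B2) B (wc L U w Q B)) /=.
rewrite [B2 :&: B]setIC.
have h1 : \sum_(i in B :\: B2) w' i <= \sum_(i in B :\: B2) wc L U w Q B i.
  apply: ler_sum => i; rewrite inE => /andP[_ hi]; rewrite /wc hi.
  case: ifP => hq; first by rewrite hQ.
  by case: (hw' i) => ->; rewrite ?hLU.
have h2 : \sum_(i in B2 :\: B) wc L U w Q B i <= \sum_(i in B2 :\: B) w' i.
  apply: ler_sum => i; rewrite inE => /andP[hi _]; rewrite /wc (negbTE hi).
  case: ifP => hq; first by rewrite hQ.
  by case: (hw' i) => ->; rewrite ?hLU.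
move=> h.
have h3 : \sum_(i in B :&: B2) w' i = \sum_(i in B :&: B2) w' i by [].
lra.
Qed.

Lemma verif_MWB_wc (E : finType) (R : realType) (I : {set {set E}}) (L U w : E -> R) Q B :
  (forall e, area L U e (w e)) ->
  verifies I L U w Q B -> is_MWB I (wc L U w Q B) B.
Proof. by move=> hw hv; apply: hv; apply: wc_consistent. Qed.

Lemma verif_MWB (E : finType) (R : realType) (I : {set {set E}}) (L U w : E -> R) Q B :
  (forall e, area L U e (w e)) ->
  verifies I L U w Q B -> is_MWB I w B.
Proof. by move=> hw hv; apply: hv; split. Qed.

Lemma sw_swap (E : finType) (R : realType) (W : E -> R) (B : {set E}) (f g : E) :
  f \in B -> g \notin B ->
  setweight W (g |: (B :\ f)) = setweight W B - W f + W g.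
Proof.
move=> hf hg; rewrite /setweight (big_setD1 f hf) big_setU1 /=; last first.
  by rewrite !inE (negbTE hg) andbF.
lra.
Qed.

Lemma swap_verif (E : finType) (R : realType) (I : {set {set E}}) (L U w : E -> R)
  (L0 U0 : R) (Q B : {set E}) (f g : E) :
  L0 < U0 -> (forall e, L e = L0) -> (forall e, U e = U0) ->
  (forall e, area L U e (w e)) ->
  verifies I L U w Q B -> f \in B -> g \notin B -> is_basis I (g |: (B :\ f)) ->
  w f = w g ->
  verifies I L U w (tperm f g @^-1: Q) (g |: (B :\ f)).
Proof.
move=> hL0U0 hL hU hw hv hf hg hB' hfg.
have hLU : forall e, L e <= U e by move=> e; rewrite hL hU ltW.
have hW := verif_MWB_wc hw hv.
have hle : wc L U w Q B f <= wc L U w Q B g.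
  have := hW.2 _ hB'; rewrite sw_swap //; lra.
have hnfg : f != g by apply: contraNneq hg => <-.
have hwf : w f = L0 \/ w f = U0 by case: (hw f); rewrite ?hL ?hU; [left|right].
have key : forall x, wc L U w (tperm f g @^-1: Q) (g |: (B :\ f)) x = wc L U w Q B x.
  move=> x; rewrite /wc !inE.
  have [->|hxf] := eqVneq x f.
    rewrite tpermL (negbTE hnfg) /= hf.
    move: hle; rewrite /wc (negbTE hg) hf !hL !hU -hfg.
    by case: (f \in Q); case: (g \in Q); rewrite /= ?hL ?hU -?hfg; case: hwf => hh; rewrite ?hh; intros; lra.
  have [->|hxg] := eqVneq x g.
    rewrite tpermR (negbTE hg) /=.
    move: hle; rewrite /wc (negbTE hg) hf !hL !hU -hfg.
    by case: (f \in Q); case: (g \in Q); rewrite /= ?hL ?hU -?hfg; case: hwf => hh; rewrite ?hh; intros; lra.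
  have h1 : f != x by rewrite eq_sym.
  have h2 : g != x by rewrite eq_sym.
  by rewrite (tpermD h1 h2).
have hWfg : wc L U w Q B f = wc L U w Q B g.
  move: hle; rewrite /wc hf (negbTE hg) !hL !hU -hfg.
  by case: (f \in Q); case: (g \in Q); rewrite /= ?hL ?hU; case: hwf => hh; rewrite ?hh; intros; lra.
apply: verif_wc => //; split => // B2 hB2.
rewrite /setweight !(eq_bigr _ (fun x _ => key x)) -!/(setweight _ _).
rewrite sw_swap // hWfg.
have := hW.2 _ hB2; lra.
Qed.

Lemma qcost_card (E : finType) (R : realType) (c : E -> R) (Q1 Q2 : {set E}) :
  (forall e e', c e = c e') -> #|Q1| = #|Q2| -> qcost c Q1 = qcost c Q2.
Proof.
move=> hc hcard; rewrite /qcost.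
case: (pickP (fun _ : E => true)) => [e0 _|h0].
  rewrite (eq_bigr (fun=> c e0)) 1?(eq_bigr (fun=> c e0) (P := fun i => i \in Q2)) //.
  by rewrite !sumr_const hcard.
by rewrite !big_pred0 // => x; have := h0 x.
Qed.

Lemma transport (E : finType) (R : realType) (I : {set {set E}}) (L U w : E -> R)
  (L0 U0 : R) n :
  is_matroid I -> L0 < U0 -> (forall e, L e = L0) -> (forall e, U e = U0) ->
  (forall e, area L U e (w e)) ->
  forall B1 B2 Q, (#|B1 :\: B2| < n)%N -> is_MWB I w B2 -> verifies I L U w Q B1 ->
  exists2 Q', verifies I L U w Q' B2 & #|Q'| = #|Q|.
Proof.
move=> hM hL0U0 hL hU hw; elim: n => [//|n IH] B1 B2 Q hn hB2 hv.
have hB1 := verif_MWB hw hv.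
have hval : forall e, w e = L0 \/ w e = U0.
  by move=> e; case: (hw e); rewrite ?hL ?hU; [left|right].
case: (set_0Vmem (B1 :\: B2)) => [h0 | [x hx]].
  have hs : B1 \subset B2 by rewrite -setD_eq0 h0.
  have := hB1.1.2 _ hB2.1.1 hs => heq.
  by exists Q => //; rewrite heq.
move: (hx); rewrite inE => /andP[hx2 hx1].
have [y hy hB3] := exchange hM hB1.1 hB2.1 hx1 hx2.
move: (hy); rewrite inE => /andP[hy1 hy2].
have hle : w x <= w y by have := hB1.2 _ hB3; rewrite sw_swap //; lra.
have [hxy | hxy] := eqVneq (w x) (w y).
  have hv3 := swap_verif hL0U0 hL hU hw hv hx1 hy1 hB3 hxy.
  have hp : (y |: (B1 :\ x)) :\: B2 \proper B1 :\: B2.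
    apply/properP; split.
      apply/subsetP => z; rewrite !inE => /andP[hz2 /orP[/eqP hzy|/andP[_ hz1]]].
        by move: hz2; rewrite hzy hy2.
      by rewrite hz2 hz1.
    exists x => //; rewrite !inE eqxx /= orbF; apply/negP => /andP[_ /eqP hxy'].
    by move: hx2; rewrite hxy' hy2.
  have hn3 : (#|(y |: (B1 :\ x)) :\: B2| < n)%N.
    by have h := proper_card hp; rewrite ltnS in hn; exact: leq_trans h hn.
  have [Q' hQ' hc] := IH _ _ _ hn3 hB2 hv3.
  by exists Q' => //; rewrite hc card_preimset //; apply: perm_inj.
have [hwx hwy] : w x = L0 /\ w y = U0.
  by case: (hval x) => h1; case: (hval y) => h2; split => //;
     move: hle hxy; rewrite h1 h2 ?eqxx //; intros; lra.
have [x' hx' hB4] := exchange hM hB2.1 hB1.1 hy2 hy1.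
move: (hx'); rewrite inE => /andP[hx'2 hx'1].
have hle2 : w y <= w x' by have := hB2.2 _ hB4; rewrite sw_swap //; lra.
have hwx' : w x' = w y by case: (hval x') => h; rewrite h; rewrite h hwy in hle2; lra.
have hB4M : is_MWB I w (x' |: (B2 :\ y)).
  split => // B' hB'; rewrite sw_swap // hwx'.
  have := hB2.2 _ hB'; lra.
have hp : B1 :\: (x' |: (B2 :\ y)) \proper B1 :\: B2.
  apply/properP; split.
    apply/subsetP => z; rewrite !inE => /andP[hz hz1].
    rewrite hz1 andbT; move: hz; rewrite negb_or => /andP[_].
    rewrite negb_and negbK => /orP[/eqP hzy|->//].
    by move: hy1; rewrite -hzy hz1.
  by exists x'; rewrite !inE ?eqxx //= hx'2 hx'1.
have hn4 : (#|B1 :\: (x' |: (B2 :\ y))| < n)%N.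
  by have h := proper_card hp; rewrite ltnS in hn; exact: leq_trans h hn.
have [Q4 hQ4 hc4] := IH _ _ _ hn4 hB4M hv.
have hx'4 : x' \in x' |: (B2 :\ y) by rewrite setU11.
have hy4 : y \notin x' |: (B2 :\ y).
  rewrite !inE eqxx /=; apply/negP => /orP[/eqP h|//]; by move: hx'1; rewrite -h (negbTE hy1).
have hset : y |: ((x' |: (B2 :\ y)) :\ x') = B2.
  apply/setP => z; rewrite !inE.
  have [->|hzy] := eqVneq z y; first by rewrite hy2.
  have [->|hzx] := eqVneq z x'; first by rewrite (negbTE hx'2).
  by [].
have hb : is_basis I (y |: ((x' |: (B2 :\ y)) :\ x')) by rewrite hset; exact: hB2.1.
have hv2 := swap_verif hL0U0 hL hU hw hQ4 hx'4 hy4 hb hwx'.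
rewrite hset in hv2.
exists (tperm x' y @^-1: Q4) => //.
by rewrite card_preimset ?hc4 //; apply: perm_inj.
Qed.

Theorem corollary23 (E : finType) (R : realType) (I : {set {set E}})
    (L U w c : E -> R) (D K : {set E}) :
  is_matroid I ->
  (forall e, L e <= U e) ->
  (forall e, area L U e (w e)) ->
  (forall e, 0 <= c e) ->
  compatible_minor I L U w c D K ->
  (forall e, e \notin D :|: K -> w e <> U e /\ w e <> L e) ->
  (is_MWB I w K /\
   exists Q, min_cost_certificate I L U w c Q /\ verifies I L U w Q K) /\
  ((forall e e', c e = c e') ->
   (exists L0 U0 : R, L0 < U0 /\ forall e, L e = L0 /\ U e = U0) ->
   forall B1 B2 x1 x2, is_MWB I w B1 -> is_MWB I w B2 ->
     verification_cost I L U w c B1 x1 -> verification_cost I L U w c B2 x2 ->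
     x1 = x2).
Proof.
move=> hM hLU hw hc [Q [B [hmc hv hBM hKB hDB]]] hout.
have hall : forall e, e \in D :|: K.
  move=> e; apply/negPn/negP => hn; case: (hout e hn) => h1 h2.
  by case: (hw e) => h; [exact: h2 h | exact: h1 h].
have hBK : B = K.
  apply/eqP; rewrite eqEsubset hKB andbT; apply/subsetP => e he.
  have := hall e; rewrite inE => /orP[hd|//].
  by rewrite (disjointFr hDB hd) in he.
subst B; split; first by split => //; exists Q.
move=> hcu [L0 [U0 [hlt hLU0]]] B1 B2 x1 x2 hB1 hB2 [[Q1 hQ1 hx1] hmin1] [[Q2 hQ2 hx2] hmin2].
have hL : forall e, L e = L0 by move=> e; case: (hLU0 e).
have hU : forall e, U e = U0 by move=> e; case: (hLU0 e).
have [Q' hQ' hc'] := transport (n := #|B1 :\: B2|.+1) hM hlt hL hU hw (ltnSn _) hB2 hQ1.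
have [Q'' hQ'' hc''] := transport (n := #|B2 :\: B1|.+1) hM hlt hL hU hw (ltnSn _) hB1 hQ2.
apply/le_anti/andP; split.
  by rewrite -hx2 -(qcost_card hcu hc''); apply: hmin1.
by rewrite -hx1 -(qcost_card hcu hc'); apply: hmin2.
Qed.
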